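(* For every fixed $i\ge0$, as $n\to\infty$ the power series $D_{n-i}(z)/D_n(z)$ converge (coefficientwise, as formal power series in $z$) to $(1-t)^{-2i}$, where $t$ is the power series with $z^3=t(1-t)^2$, $t=z^3+O(z^6)$.
   Context: For $h\ge1$, $D_h=D_h(z)$ is the determinant of the $h\times h$ matrix $T_h$ (rows/columns indexed $0,\dots,h-1$) with entries $(T_h)_{p,p}=1$, $(T_h)_{p,p+1}=-2z$, $(T_h)_{p,p+2}=z^2$, $(T_h)_{p+1,p}=-z^2$, and all other entries $0$; $D_0=1$. Each $D_h$ is a polynomial in $z^3$ with constant term $1$. *)

(* Defs.v *)
From HB Require Import structures.
From mathcomp Require Import all_boot all_order all_algebra.
Set Implicit Arguments. Unset Strict Implicit. Unset Printing Implicit Defensive.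
Import Order.TTheory GRing.Theory Num.Theory.
Local Open Scope ring_scope.

Definition Tmat (h : nat) : 'M[{poly rat}]_h :=
  \matrix_(p < h, q < h)
    if (q == p :> nat) then 1
    else if (q == p.+1 :> nat) then - 2%:R *: 'X
    else if (q == p.+2 :> nat) then 'X ^+ 2
    else if (p == q.+1 :> nat) then - 'X ^+ 2
    else 0.

(* D_h = det T_h; for h = 0 the empty determinant is 1. *)
Definition D (h : nat) : {poly rat} := \det (Tmat h).

Definition fps := nat -> rat.

Definition fps_of_poly (p : {poly rat}) : fps := fun k => p`_k.

Definition fps_one : fps := fun k => if k == 0%N then 1 else 0.

Definition fps_sub (f g : fps) : fps := fun k => f k - g k.

Definition fps_mul (f g : fps) : fps :=
  fun k => \sum_(j < k.+1) f j * g (k - j)%N.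

Fixpoint fps_pow (f : fps) (m : nat) : fps :=
  match m with 0 => fps_one | m'.+1 => fps_mul f (fps_pow f m') end.

Fixpoint inv_seq (f : fps) (m : nat) : seq rat :=
  match m with
  | 0 => [::]
  | m'.+1 =>
      let s := inv_seq f m' in
      rcons s (if m' == 0%N then (f 0%N)^-1
               else - (f 0%N)^-1 * \sum_(j < m') f (m' - j)%N * s`_j)
  end.

Definition fps_inv (f : fps) : fps := fun k => (inv_seq f k.+1)`_k.

Definition fps_div (f g : fps) : fps := fps_mul f (fps_inv g).

(* Main.v *)
Require Import Defs.
From HB Require Import structures.
From mathcomp Require Import all_boot all_order all_algebra.
From mathcomp Require Import zify ring.
Import Order.TTheory GRing.Theory Num.Theory.
Local Open Scope ring_scope.

Definition Te (p q : nat) : {poly rat} :=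
    if (q == p :> nat) then 1
    else if (q == p.+1 :> nat) then - 2%:R *: 'X
    else if (q == p.+2 :> nat) then 'X ^+ 2
    else if (p == q.+1 :> nat) then - 'X ^+ 2
    else 0.

Lemma TmatE h (p q : 'I_h) : Tmat h p q = Te p q.
Proof. by rewrite mxE. Qed.

Lemma sign_even (a : nat) : (-1) ^+ (a + a) = 1 :> {poly rat}.
Proof. by rewrite exprD -expr2 sqrr_sign. Qed.

Lemma detT m (A : 'M[{poly rat}]_m.+1) :
  (forall (p q : 'I_m.+1), (q < m)%N -> A p q = Te p q) ->
  \det A = \sum_(j < m.+1) ('X^2)^+(m - j) * A j ord_max * D j.
Proof.
elim: m A => [|m IH] A HA.
  rewrite [\det A](_ : _ = A 0 0); last first.
    by rewrite det_mx11.
  by rewrite big_ord1 /D det_mx00 expr0 mul1r mulr1; congr (A _ _); apply: val_inj.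
rewrite (expand_det_row _ ord_max) big_ord_recr /=.
rewrite [X in _ = X]big_ord_recr /= subnn expr0 mul1r.
congr (_ + _); last first.
  congr (_ * _); rewrite /cofactor sign_even mul1r /D; congr (\det _).
  have bm : forall (p : 'I_m.+2.-1), bump m.+1 p = p.
    by move=> p; rewrite /bump leqNgt ltn_ord.
  apply/matrixP => p q; rewrite !mxE HA /= !bm //.
rewrite big_ord_recr /=.
set B := row' ord_max (col' (widen_ord (leqnSn m.+1) ord_max) A).
have HB : forall (p q : 'I_m.+1), (q < m)%N -> B p q = Te p q.
  move=> p q hq; rewrite !mxE HA /=.
  - by rewrite /bump (leqNgt m.+1 p) ltn_ord (leqNgt m q) hq.
  - by rewrite /bump (leqNgt m q) hq /= add0n ltnS ltnW.
have -> : cofactor A ord_max (widen_ord (leqnSn m.+1) ord_max) = - \det B.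
  by rewrite /cofactor /= addSn exprS sign_even mulr1 mulN1r.
rewrite (IH B HB).
rewrite big1 ?add0r; last first.
  move=> j _; rewrite HA /=; last by rewrite ltnS ltnW.
  rewrite /Te; have hj := ltn_ord j.
  rewrite !ifF ?mul0r //; apply/negbTE; rewrite -?(inj_eq val_inj) /=; lia.
rewrite HA //= /Te.
rewrite eqxx ifF; last by apply/negbTE; lia.
rewrite ifF; last by apply/negbTE; lia.
rewrite ifF; last by apply/negbTE; lia.
rewrite mulrN mulNr opprK mulr_sumr [in RHS]big_ord_recr /= subSnn expr1.
have HBm : forall i : 'I_m.+1, B i ord_max = A (widen_ord (leqnSn m.+1) i) ord_max.
  move=> i; rewrite !mxE; congr (A _ _); apply: val_inj => /=.
    by rewrite /bump leqNgt ltn_ord.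
  by rewrite /bump leqnn.
rewrite big_ord_recr /= subnn expr0 mul1r HBm mulrA.
congr (_ + _).
apply: eq_bigr => i _; rewrite HBm /= subSn; last exact: ltnW.
by rewrite [_ ^+ (m - i).+1]exprS !mulrA.
Qed.

Lemma Dsucc m : D m.+1 = \sum_(j < m.+1) ('X^2)^+(m - j) * Te j m * D j.
Proof.
rewrite {1}/D (@detT m (Tmat m.+1)); last by move=> p q _; rewrite TmatE.
by apply: eq_bigr => j _; rewrite TmatE.
Qed.

Lemma D0 : D 0 = 1. Proof. by rewrite /D det_mx00. Qed.

Lemma D1 : D 1 = 1.
Proof. by rewrite Dsucc big_ord1 /= expr0 mul1r /Te eqxx mul1r D0. Qed.

Lemma m2X : - 2%:R *: 'X = - 2%:R * 'X :> {poly rat}.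
Proof. by rewrite -mul_polyC polyCN polyC_natr. Qed.

Lemma D2 : D 2 = 1 - 2%:R * 'X^3.
Proof.
rewrite Dsucc !big_ord_recr big_ord0 /= add0r D0 D1 /Te /= m2X.
ring.
Qed.

Lemma Drec n : D n.+3 = D n.+2 - 2%:R * 'X^3 * D n.+1 + 'X^6 * D n.
Proof.
rewrite Dsucc !big_ord_recr /= big1; last first.
  move=> j _; rewrite /Te; have hj := ltn_ord j.
  rewrite !ifF ?mulr0 ?mul0r //; apply/negbTE; lia.
rewrite /Te !eqxx /=.
rewrite ifF; last by apply/negbTE; lia.
rewrite ifF; last by apply/negbTE; lia.
rewrite ifF; last by apply/negbTE; lia.
rewrite subnn subSnn (_ : (n.+2 - n = 2)%N); last by lia.
rewrite m2X add0r; ring.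
Qed.
Set Implicit Arguments. Unset Strict Implicit.

Definition lowz (m : nat) (p : {poly rat}) := forall j, (j < m)%N -> p`_j = 0.

Lemma lowzD m p q : lowz m p -> lowz m q -> lowz m (p + q).
Proof. by move=> hp hq j hj; rewrite coefD hp ?hq ?addr0. Qed.
Lemma lowzN m p : lowz m p -> lowz m (- p).
Proof. by move=> hp j hj; rewrite coefN hp ?oppr0. Qed.
Lemma lowzB m p q : lowz m p -> lowz m q -> lowz m (p - q).
Proof. by move=> hp hq; apply: lowzD => //; apply: lowzN. Qed.
Lemma lowzM a b p q : lowz a p -> lowz b q -> lowz (a + b) (p * q).
Proof.
move=> hp hq j hj; rewrite coefM big1 // => i _.
case: (ltnP i a) => hi; first by rewrite hp ?mul0r.
rewrite hq ?mulr0 //; have := ltn_ord i; lia.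
Qed.
Lemma lowzW m m' p : (m <= m')%N -> lowz m' p -> lowz m p.
Proof. by move=> hm hp j hj; apply: hp; apply: leq_trans hm. Qed.
Lemma lowz0 p : lowz 0 p. Proof. by []. Qed.
Lemma lowz_0 m : lowz m 0. Proof. by move=> j _; rewrite coef0. Qed.
Lemma lowzMl m p q : lowz m q -> lowz m (p * q).
Proof. by move=> hq; rewrite -[m]add0n; apply: lowzM => //. Qed.
Lemma lowzMr m p q : lowz m p -> lowz m (p * q).
Proof. by move=> hp; rewrite -[m]addn0; apply: lowzM. Qed.
Lemma lowzXn n : lowz n 'X^n.
Proof. by move=> j hj; rewrite coefXn; case: eqP => // hjn; rewrite hjn ltnn in hj. Qed.

Definition agree N (f : fps) (p : {poly rat}) := forall k, (k < N)%N -> f k = p`_k.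
Definition trunc N (f : fps) : {poly rat} := \poly_(i < N) f i.

Lemma agree_trunc N f : agree N f (trunc N f).
Proof. by move=> k hk; rewrite coef_poly hk. Qed.
Lemma agree_poly N p : agree N (fps_of_poly p) p.
Proof. by []. Qed.
Lemma agree_one N : agree N fps_one 1.
Proof. by move=> k _; rewrite coef1 /fps_one; case: (k == 0%N). Qed.
Lemma agree_sub N f g p q : agree N f p -> agree N g q -> agree N (fps_sub f g) (p - q).
Proof. by move=> hf hg k hk; rewrite coefB /fps_sub hf ?hg. Qed.
Lemma agree_mul N f g p q : agree N f p -> agree N g q -> agree N (fps_mul f g) (p * q).
Proof.
move=> hf hg k hk; rewrite coefM /fps_mul; apply: eq_bigr => j _.
have := ltn_ord j => hj.
rewrite hf ?hg //; lia.
Qed.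
Lemma agree_pow N f p m : agree N f p -> agree N (fps_pow f m) (p ^+ m).
Proof.
move=> hf; elim: m => [|m IH] /=; first by rewrite expr0; apply: agree_one.
by rewrite exprS; apply: agree_mul.
Qed.

Lemma size_inv_seq f m : size (inv_seq f m) = m.
Proof. by elim: m => //= m IH; rewrite size_rcons IH. Qed.

Lemma inv_seq_nth f m j : (j < m)%N -> (inv_seq f m)`_j = fps_inv f j.
Proof.
elim: m => // m IH hj; case: (ltngtP j m) => [hjm | hmj | ->] //.
- by rewrite /= nth_rcons size_inv_seq hjm; apply: IH.
- lia.
Qed.

Lemma fps_mul_inv f : f 0%N != 0 -> forall k, fps_mul f (fps_inv f) k = fps_one k.
Proof.
move=> hf k; rewrite /fps_mul (reindex_inj rev_ord_inj) /=.
rewrite (eq_bigr (fun j : 'I_k.+1 => f (k - j)%N * fps_inv f j)); last first.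
  by move=> j _; rewrite /= subSS subKn // -ltnS.
rewrite big_ord_recr /= subnn.
have -> : fps_inv f k = (inv_seq f k.+1)`_k by [].
rewrite /= nth_rcons size_inv_seq ltnn eqxx /fps_one.
case: k => [|k]; first by rewrite big_ord0 add0r /= mulfV.
rewrite /=.
rewrite (eq_bigr (fun j : 'I_k.+1 => f (k.+1 - j)%N * fps_inv f j) (P := xpredT)
  (F1 := fun j : 'I_k.+1 => f (k.+1 - j)%N * (inv_seq f k.+1)`_j)); last first.
  by move=> j _; rewrite inv_seq_nth.
by rewrite mulrA mulrN mulfV // mulN1r subrr.
Qed.

Lemma agree_lowz N f g p q : agree N f p -> agree N g q ->
  (forall j, fps_mul f g j = fps_one j) -> lowz N (p * q - 1).
Proof.
move=> hf hg h j hj; rewrite coefB -(agree_mul hf hg hj) h (agree_one hj).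
by rewrite subrr.
Qed.
Set Implicit Arguments. Unset Strict Implicit.

Lemma D_const n : (D n)`_0 = 1.
Proof.
suff H : forall n, lowz 1 (D n - 1) /\ lowz 1 (D n.+1 - 1) /\ lowz 1 (D n.+2 - 1).
  by have := (H n).1 0%N isT; rewrite coefB coef1 /= => /eqP; rewrite subr_eq0 => /eqP.
elim=> [|m [h0 [h1 h2]]].
  rewrite D0 D1 D2 subrr; split; first exact: lowz_0.
  split; first exact: lowz_0.
  rewrite (_ : _ - _ = 'X^3 * (- 2%:R)); last by ring.
  by apply: (@lowzW 1 3) => //; apply: lowzMr; apply: lowzXn.
split=> //; split=> //.
rewrite Drec (_ : _ - _ = (D m.+2 - 1) + 'X^3 * (- 2%:R * D m.+1 + 'X^3 * D m)); last by ring.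
apply: lowzD => //; apply: (@lowzW 1 3) => //; apply: lowzMr; apply: lowzXn.
Qed.

Section Main.
Variable t : fps.
Variable P : nat.
Hypothesis ht_eq : fps_of_poly ('X ^+ 3) = fps_mul t (fps_pow (fps_sub fps_one t) 2).
Hypothesis ht_low : forall j : nat, (j < 6)%N -> t j = (if j == 3%N then 1 else 0).

Let T := trunc P t.
Let R := (1 - T) ^+ 2.

Lemma hT3 : lowz 3 T.
Proof.
move=> j hj; rewrite coef_poly; case: ifP => // _; rewrite ht_low; last by lia.
by case: eqP => // ?; subst j.
Qed.

Lemma hTe : lowz P ('X^3 - T * (1 - T) ^+ 2).
Proof.
move=> j hj; rewrite coefB -(@agree_poly P ('X^3) j hj) ht_eq.
rewrite (agree_mul (@agree_trunc P t) (agree_pow 2 (agree_sub (@agree_one P) (@agree_trunc P t))) hj).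
by rewrite subrr.
Qed.

Lemma Gl m : lowz (minn m P) (D m.+1 - R * D m).
Proof.
suff H : forall m, lowz (minn m P) (D m.+1 - R * D m) /\
                   lowz (minn m.+1 P) (D m.+2 - R * D m.+1) by exact: (H m).1.
have h3 := hT3; have he := hTe.
move=> {}m; elim: m => [|m [h0 h1]].
  split; first by rewrite min0n; apply: lowz0.
  rewrite D2 D1 /R (_ : _ - _ = 'X^3 * (- 2%:R) + T * (2%:R - T)); last by ring.
  apply: (@lowzW _ 3); first by lia.
  by apply: lowzD; apply: lowzMr => //; apply: lowzXn.
split=> //.
set e := 'X^3 - T * (1 - T) ^+ 2.
have -> : D m.+3 - R * D m.+2 = - (T * (T - 2%:R)) * (D m.+2 - R * D m.+1)
   - (T * (T * (1 - T) ^+ 2)) * (D m.+1 - R * D m)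
   - 2%:R * e * D m.+1 + e * (T * (1 - T) ^+ 2 + 'X^3) * D m.
  by rewrite Drec /e /R; ring.
apply: lowzD; last by apply: (@lowzW _ P); [lia | do 2 apply: lowzMr; exact: he].
apply: lowzB; last by apply: (@lowzW _ P); [lia | apply: lowzMr; apply: lowzMl; exact: he].
apply: lowzB.
  rewrite mulNr; apply: lowzN; apply: (@lowzW _ (3 + minn m.+1 P)); first by lia.
  by apply: lowzM => //; apply: lowzMr.
apply: (@lowzW _ (3 + minn m P)); first by lia.
by apply: lowzM => //; apply: lowzMr.
Qed.

Lemma Giter m j : lowz (minn m P) (D (m + j) - R ^+ j * D m).
Proof.
elim: j => [|j IH]; first by rewrite addn0 expr0 mul1r subrr; apply: lowz_0.
rewrite addnS (_ : _ - _ = (D (m + j).+1 - R * D (m + j)) + R * (D (m + j) - R ^+ j * D m)).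
  apply: lowzD; last by apply: lowzMl.
  by apply: (@lowzW _ (minn (m + j) P)); [lia | apply: Gl].
by rewrite exprS; ring.
Qed.

Lemma pow_const m : lowz 1 ((1 - T) ^+ m - 1).
Proof.
have h1 : lowz 1 T by apply: (@lowzW _ 3) => //; apply: hT3.
elim: m => [|m IH]; first by rewrite expr0 subrr; apply: lowz_0.
rewrite (_ : _ - _ = (1 - T) * ((1 - T) ^+ m - 1) - T); last by rewrite exprS; ring.
by apply: lowzB => //; apply: lowzMl.
Qed.

End Main.

Theorem mainTheorem4 (t : fps)
  (ht_eq : fps_of_poly ('X ^+ 3) = fps_mul t (fps_pow (fps_sub fps_one t) 2))
  (ht_low : forall j : nat, (j < 6)%N -> t j = (if j == 3%N then 1 else 0)) :
  forall (i k : nat), exists N : nat, forall n : nat, (N <= n)%N ->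
    fps_div (fps_of_poly (D (n - i))) (fps_of_poly (D n)) k
    = fps_inv (fps_pow (fps_sub fps_one t) (2 * i)) k.
Proof.
move=> i k; exists (i + k.+1)%N => n hn.
set P := k.+1.
have hk : (k < P)%N by [].
set T := trunc P t.
set Q := trunc P (fps_inv (fps_of_poly (D n))).
set S := fps_pow (fps_sub fps_one t) (2 * i).
set W := trunc P (fps_inv S).
have aS : agree P S ((1 - T) ^+ (2 * i)).
  by apply: agree_pow; apply: agree_sub; [apply: agree_one | apply: agree_trunc].
have hQ : lowz P (D n * Q - 1).
  apply: (agree_lowz (@agree_poly P (D n)) (@agree_trunc P _)).
  by apply: fps_mul_inv; rewrite /fps_of_poly D_const oner_neq0.
have hW : lowz P ((1 - T) ^+ (2 * i) * W - 1).
  apply: (agree_lowz aS (@agree_trunc P _)).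
  apply: fps_mul_inv; rewrite (aS 0%N isT).
  have := @pow_const t P ht_low (2 * i) 0%N (ltn0Sn 0).
  by rewrite coefB coef1 /= => /eqP; rewrite subr_eq0 => /eqP ->; rewrite oner_neq0.
have hG := @Giter t P ht_eq ht_low (n - i) i.
rewrite subnK in hG; last by lia.
rewrite (_ : minn (n - i) P = P) in hG; last by lia.
rewrite -exprM mulnC in hG.
rewrite /fps_div (agree_mul (@agree_poly P (D (n - i))) (@agree_trunc P _) hk).
rewrite -/Q (@agree_trunc P (fps_inv S) k hk) -/W.
have H : lowz P (D (n - i) * Q - W).
  rewrite (_ : _ - _ = - (((1 - T) ^+ (2 * i) * W - 1) * D (n - i) * Q)
     - W * (D n - (1 - T) ^+ (i * 2) * D (n - i)) * Q + W * (D n * Q - 1)).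
    apply: lowzD; last by apply: lowzMl.
    apply: lowzB; first by apply: lowzN; do 2 apply: lowzMr.
    by apply: lowzMr; apply: lowzMl.
  by rewrite mulnC; ring.
by have := H k hk; rewrite coefB => /eqP; rewrite subr_eq0 => /eqP.
Qed.
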